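(* Let $X,Y$ be nonempty sets and let $F\colon X^*\to Y$ be a function such that $F_1$ is one-to-one. Consider: (i) $F$ is preassociative and unarily quasi-range-idempotent; (ii) there is a unique $\varepsilon$-standard operation $H\colon X^*\to X\cup\{\varepsilon\}$ such that $F^{\flat}=F_1\circ H^{\flat}$, namely $H^{\flat}=F_1^{-1}\circ F^{\flat}$, and this operation is associative and unarily idempotent. Then (i) implies (ii). If $F$ is standard, then (ii) implies (i).
   Context: $X^*=\bigcup_{n\geqslant 0}X^n$ is the set of finite tuples over $X$, $X^0=\{\varepsilon\}$ with $\varepsilon\notin X$ the empty tuple; $F(\mathbf{x},\mathbf{y})$ denotes $F$ applied to the concatenation, and concatenation with $\varepsilon$ leaves tuples unchanged. $F_n=F|_{X^n}$ ($X^1$ identified with $X$), $F^{\flat}=F|_{X^*\setminus\{\varepsilon\}}$. $F$ is standard if $F(\mathbf{x})=F(\varepsilon)$ only for $\mathbf{x}=\varepsilon$. $F$ is preassociative if for all $\mathbf{x},\mathbf{y},\mathbf{y}',\mathbf{z}\in X^*$, $F(\mathbf{y})=F(\mathbf{y}')$ implies $F(\mathbf{x},\mathbf{y},\mathbf{z})=F(\mathbf{x},\mathbf{y}',\mathbf{z})$. $F$ is unarily quasi-range-idempotent if $\mathrm{ran}(F_1)=\mathrm{ran}(F^{\flat})$. An operation $H\colon X^*\to X\cup\{\varepsilon\}$ is $\varepsilon$-standard if it is standard and $H(\varepsilon)=\varepsilon$; it is associative if $H(\mathbf{x},\mathbf{y},\mathbf{z})=H(\mathbf{x},H(\mathbf{y}),\mathbf{z})$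 for all $\mathbf{x},\mathbf{y},\mathbf{z}\in X^*$ (a value $\varepsilon$ treated as the empty tuple); it is unarily idempotent if $H_1$ is the identity of $X$. *)

(* Defs.v *)
(* X^* is modelled as [list X]; the empty tuple is [nil];
   concatenation is [++].  The codomain X ∪ {ε} is modelled as [option X],
   with [None] playing the role of ε. *)
From Stdlib Require Import List.
Import ListNotations.
Set Implicit Arguments.

Definition opt_tuple {X : Type} (o : option X) : list X :=
  match o with Some a => [a] | None => [] end.

Definition F1_injective {X Y : Type} (F : list X -> Y) : Prop :=
  forall a b : X, F [a] = F [b] -> a = b.

Definition standard {X Y : Type} (F : list X -> Y) : Prop :=
  forall x : list X, F x = F [] -> x = [].

Definition preassociative {X Y : Type} (F : list X -> Y) : Prop :=
  forall x y y' z : list X, F y = F y' -> F (x ++ y ++ z) = F (x ++ y' ++ z).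

Definition unarily_quasi_range_idempotent {X Y : Type} (F : list X -> Y) : Prop :=
  forall v : Y, (exists a : X, F [a] = v) <-> (exists x : list X, x <> [] /\ F x = v).

Definition eps_standard {X : Type} (H : list X -> option X) : Prop :=
  standard H /\ H [] = None.

Definition associative_op {X : Type} (H : list X -> option X) : Prop :=
  forall x y z : list X, H (x ++ y ++ z) = H (x ++ opt_tuple (H y) ++ z).

Definition unarily_idempotent {X : Type} (H : list X -> option X) : Prop :=
  forall a : X, H [a] = Some a.

(* F^flat = F_1 ∘ H^flat : for every nonempty x, H x is an element a of X
   (not ε) and F_1 a = F x. *)
Definition factors_through {X Y : Type} (F : list X -> Y) (H : list X -> option X) : Prop :=
  forall x : list X, x <> [] ->
    match H x with Some a => F [a] = F x | None => False end.

(* Main.v *)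
Require Import Defs.
From Stdlib Require Import List ClassicalEpsilon.
Import ListNotations.

Lemma fac_eq {X Y : Type} (F : list X -> Y) (H : list X -> option X) :
  factors_through F H -> forall u v, u <> [] -> v <> [] -> H u = H v -> F u = F v.
Proof.
  intros Hf u v hu hv e. pose proof (Hf u hu) as A. pose proof (Hf v hv) as B.
  rewrite e in A. destruct (H v); [congruence|contradiction].
Qed.

Lemma app_ne {X : Type} (x y z : list X) : y <> [] -> x ++ y ++ z <> [].
Proof. intros h e. apply app_eq_nil in e as [_ e]. apply app_eq_nil in e as [e _]. auto. Qed.

Theorem corollary4p5 (X Y : Type) (hX : inhabited X) (hY : inhabited Y)
  (F : list X -> Y) (hF1 : F1_injective F) :
  let cond_i := preassociative F /\ unarily_quasi_range_idempotent F in
  let cond_ii :=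
    exists H : list X -> option X,
      eps_standard H /\ factors_through F H
      /\ (forall H' : list X -> option X,
            eps_standard H' -> factors_through F H' -> forall x, H' x = H x)
      /\ (forall (x : list X) (a : X), x <> [] -> (H x = Some a <-> F [a] = F x))
      /\ associative_op H /\ unarily_idempotent H in
  (cond_i -> cond_ii) /\ (standard F -> cond_ii -> cond_i).
Proof.
  intros ci cii. split.
  - intros [PA QR].
    set (H := fun x : list X => match x with [] => None
                | _ => Some (epsilon hX (fun a => F [a] = F x)) end).
    assert (Hspec : forall x, x <> [] -> F [epsilon hX (fun a => F [a] = F x)] = F x).
    { intros x hx. apply (epsilon_spec hX (fun a => F [a] = F x)).
      apply (proj2 (QR (F x))). eauto. }
    assert (Hne : forall x, x <> [] -> H x = Some (epsilon hX (fun a => F [a] = F x))).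
    { intros [|? ?] hx; [congruence|reflexivity]. }
    assert (FT : factors_through F H).
    { intros x hx. rewrite Hne by auto. auto. }
    assert (IFF : forall (x : list X) (a : X), x <> [] -> (H x = Some a <-> F [a] = F x)).
    { intros x a hx. rewrite Hne by auto. split.
      - intros e; inversion e; subst. auto.
      - intros e. f_equal. apply hF1. rewrite Hspec by auto. auto. }
    assert (HEQ : forall u v, u <> [] -> v <> [] -> F u = F v -> H u = H v).
    { intros u v hu hv e. rewrite (Hne u hu), (Hne v hv). f_equal. apply hF1.
      rewrite !Hspec by auto. auto. }
    exists H. split; [split|split; [exact FT|split; [|split; [exact IFF|split]]]].
    + intros [|? ?]; simpl; congruence.
    + reflexivity.
    + intros H' [S' E'] F' x. destruct x as [|b l].
      * simpl. auto.
      * assert (hx : b :: l <> []) by congruence.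
        pose proof (F' _ hx) as A. destruct (H' (b :: l)) as [c|] eqn:E; [|contradiction].
        symmetry. apply IFF; auto.
    + intros x y z. destruct y as [|b l].
      * simpl. reflexivity.
      * assert (hy : b :: l <> []) by congruence.
        destruct (H (b :: l)) as [c|] eqn:E.
        -- apply IFF in E; auto. simpl opt_tuple.
           apply HEQ; try apply app_ne; try congruence.
           apply PA. auto.
        -- pose proof (FT _ hy) as A. rewrite E in A. contradiction.
    + intros a. apply IFF; congruence.
  - intros SF [H [[SH EH] [FT [_ [IFF [AS UI]]]]]]. split.
    + intros x y y' z e.
      destruct y as [|b l]; destruct y' as [|b' l'].
      * reflexivity.
      * symmetry in e. apply SF in e. discriminate.
      * apply SF in e. discriminate.
      * assert (hy : b :: l <> []) by congruence.
        assert (hy' : b' :: l' <> []) by congruence.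
        apply (fac_eq _ _ FT); try apply app_ne; auto.
        rewrite AS. rewrite (AS x (b' :: l') z).
        pose proof (FT _ hy) as A. pose proof (FT _ hy') as B.
        destruct (H (b :: l)) as [c|]; [|contradiction].
        destruct (H (b' :: l')) as [c'|]; [|contradiction].
        assert (c = c') by (apply hF1; congruence). subst. reflexivity.
    + intros v. split.
      * intros [a e]. exists [a]. split; [congruence|auto].
      * intros [x [hx e]]. pose proof (FT _ hx) as A.
        destruct (H x) as [a|]; [|contradiction]. exists a. congruence.
Qed.
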